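(* Let $C_n(a,b)$ be a connected $2$-regular circulant digraph, and let $l\ge1$, $0\le k\le l$ with $la+k(b-a)=\omega n$ for a positive integer $\omega$. Then for each $p\in\mathcal{P}_{l,k}(C_n(a,b))$ there exist a positive integer $q$ with $q\mid\gcd(l,k)$ and $\gcd(q,\omega)=1$, a word $w\in\mathbb{L}_2^q(l,k)$, and a vertex $v$ such that $p=\varphi(w,v)$.
   Context: Let $n\ge 2$ and $0<a<b<n$ be integers with $\gcd(n,a,b)=1$. $C_n(a,b)$ has vertex set $\mathbb{Z}_n$ and directed bonds $(v,v+a)$, $(v,v+b)$ (addition mod $n$), with step sizes $a$, $b$. A path of length $l$ is a sequence of bonds $(e_1,\dots,e_l)$ with the terminus of $e_j$ equal to the origin of $e_{j+1}$; its $b$-count is the number of bonds of step size $b$; its step sequence is the sequence of step sizes; a circuit is a path whose last terminus equals its first origin. A periodic orbit is an equivalence class of circuits under cyclic rotation; it is primitive if it is not $[c_0^r]$ for a circuit $c_0$ and $r>1$ ($c_0^r$ = concatenation of $r$ copies). $\mathcal{P}_{l,k}(C_n(a,b))$ is the set of primitive periodic orbits of length $l$ and $b$-count $k$. Words over $\{a,b\}$ are ordered lexicographically with $a\prec b$; a word is Lyndon if strictly smaller than all its nontrivial cyclic rotations; $\mathbb{L}_2(l,k)$ is the set of Lyndon words of length $l$ with exactly $k$ letters $b$, and for $q\mid\gcd(l,k)$, $\mathbb{L}_2^q(l,k)=\{x^q: x\in\mathbb{L}_2(l/q,k/q)\}$. Identifying letters $a,b$ with step sizes $a,b$, $\psi(w,v)$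 is the unique path starting at vertex $v$ with step sequence $w$; when it is a circuit, $\varphi(w,v)=[\psi(w,v)]$. *)

(* Defs.v *)
From mathcomp Require Import all_boot.
Set Implicit Arguments. Unset Strict Implicit. Unset Printing Implicit Defensive.

(* Since 0 < a < b < n, the two bonds out of a vertex
   are distinct, so the step size of a bond is determined by the bond. *)
Definition bond := (nat * nat)%type.

Definition is_bond (n a b : nat) (e : bond) : Prop :=
  e.1 < n /\ (e.2 = (e.1 + a) %% n \/ e.2 = (e.1 + b) %% n).

Definition is_b_bond (n b : nat) (e : bond) : bool := e.2 == (e.1 + b) %% n.

Fixpoint chained (c : seq bond) : Prop :=
  match c with
  | e1 :: ((e2 :: _) as c') => e1.2 = e2.1 /\ chained c'
  | _ => True
  end.

Definition is_path (n a b : nat) (c : seq bond) : Prop :=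
  (forall e, e \in c -> is_bond n a b e) /\ chained c.

Definition is_circuit (n a b : nat) (c : seq bond) : Prop :=
  c <> [::] /\ is_path n a b c /\ (last (0, 0) c).2 = (head (0, 0) c).1.

Definition bcount (n b : nat) (c : seq bond) : nat := count (is_b_bond n b) c.

Definition rot_class (c : seq bond) : seq bond -> Prop :=
  fun c' => exists i, c' = rot i c.

Definition periodic_orbit (n a b : nat) (p : seq bond -> Prop) : Prop :=
  exists c, is_circuit n a b c /\ p = rot_class c.

Definition primitive_orbit (n a b : nat) (p : seq bond -> Prop) : Prop :=
  ~ exists c0 r, is_circuit n a b c0 /\ 1 < r /\ p = rot_class (flatten (nseq r c0)).

Definition in_P (n a b l k : nat) (p : seq bond -> Prop) : Prop :=
  (exists c, is_circuit n a b c /\ p = rot_class c /\ size c = l /\ bcount n b c = k)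
  /\ primitive_orbit n a b p.

Inductive letter := La | Lb.

Definition letter_lt (x y : letter) : bool :=
  match x, y with La, Lb => true | _, _ => false end.

Definition letter_eqb (x y : letter) : bool :=
  match x, y with La, La | Lb, Lb => true | _, _ => false end.

Fixpoint lex_lt (u v : seq letter) : bool :=
  match u, v with
  | [::], [::] => false
  | [::], _ :: _ => true
  | _ :: _, [::] => false
  | x :: u', y :: v' => letter_lt x y || (letter_eqb x y && lex_lt u' v')
  end.

Definition lyndon (w : seq letter) : Prop :=
  w <> [::] /\ forall i, 0 < i < size w -> lex_lt w (rot i w).

Definition countb (w : seq letter) : nat :=
  count (fun x => letter_eqb x Lb) w.

Definition inL2 (l k : nat) (w : seq letter) : Prop :=
  size w = l /\ countb w = k /\ lyndon w.

Definition inL2q (q l k : nat) (w : seq letter) : Prop :=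
  exists x, inL2 (l %/ q) (k %/ q) x /\ w = flatten (nseq q x).

Definition step (a b : nat) (x : letter) : nat :=
  match x with La => a | Lb => b end.

Fixpoint psi (n a b : nat) (w : seq letter) (v : nat) : seq bond :=
  match w with
  | [::] => [::]
  | x :: w' => (v, (v + step a b x) %% n) :: psi n a b w' ((v + step a b x) %% n)
  end.

(* Main.v *)
From HB Require Import structures.
Require Import Defs.
From mathcomp Require Import all_boot zify.
From Stdlib Require Import FunctionalExtensionality PropExtensionality.

Lemma letter_eqP : Equality.axiom letter_eqb.
Proof. by case; case; constructor. Qed.
HB.instance Definition _ := hasDecEq.Build letter letter_eqP.

Definition lv (x : letter) := if x is Lb then 1 else 0.
Fixpoint code (w : seq letter) : nat :=
  match w with [::] => 0 | x :: w' => lv x * 2 ^ (size w') + code w' end.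

Lemma code_lt w : code w < 2 ^ size w.
Proof.
elim: w => [//|x w IH] /=; rewrite expnS.
case: x => /=; lia.
Qed.

Lemma code_cat u v : code (u ++ v) = code u * 2 ^ size v + code v.
Proof.
elim: u => [//|x u IH] /=; rewrite IH size_cat expnD; lia.
Qed.

Lemma lex_code u v : size u = size v -> lex_lt u v = (code u < code v).
Proof.
elim: u v => [|x u IH] [|y v] //= [E]; rewrite IH //.
have := code_lt u; have := code_lt v; rewrite E.
set P := 2 ^ size v => hv hu.
case: x; case: y => /=; apply/idP/idP; nia.
Qed.

Lemma code_inj u v : size u = size v -> code u = code v -> u = v.
Proof.
elim: u v => [|x u IH] [|y v] //= [E] C.
have := code_lt u; have := code_lt v; rewrite E in C *.
set P := 2 ^ size v in C * => hv hu.
have xy : x = y by case: x C; case: y => //= C; exfalso; lia.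
subst y; congr (_ :: _); apply: IH => //; case: x C => /=; lia.
Qed.

Definition pw (q : nat) (x : seq letter) := flatten (nseq q x).

Lemma size_pw {T : Type} q (x : seq T) : size (flatten (nseq q x)) = q * size x.
Proof. elim: q => [//|q IH] /=; rewrite size_cat IH mulSn. done. Qed.

Lemma count_pw {T : Type} (P : pred T) q x : count P (flatten (nseq q x)) = q * count P x.
Proof. elim: q => [//|q IH] /=; rewrite count_cat IH mulSn. done. Qed.

Lemma code_pw_lt q x y : 0 < q -> size x = size y -> code x < code y ->
  code (flatten (nseq q x)) < code (flatten (nseq q y)).
Proof.
case: q => [//|q] _ E C /=; rewrite !code_cat !size_pw E.
have := code_lt (flatten (nseq q x)); have := code_lt (flatten (nseq q y)).
rewrite !size_pw E; set P := 2 ^ _ => h1 h2.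
nia.
Qed.

Lemma pw_shift {T : Type} (u v : seq T) q :
  u ++ flatten (nseq q (v ++ u)) = flatten (nseq q (u ++ v)) ++ u.
Proof.
elim: q => [|q IH] /=; first by rewrite cats0.
by rewrite -!catA IH.
Qed.

Lemma rot_pw {T : Type} i q (x : seq T) : i <= size x ->
  rot i (flatten (nseq q x)) = flatten (nseq q (rot i x)).
Proof.
move=> hi; case: q => [|q]; first by rewrite /= /rot.
rewrite -(cat_take_drop i x) /=.
have st : size (take i x) = i by rewrite size_takel.
rewrite -catA /rot take_size_cat // drop_size_cat //.
rewrite take_size_cat // drop_size_cat //.
by rewrite -catA -pw_shift catA.
Qed.

Lemma lyndon_decomp (s : seq letter) : 0 < size s ->
  exists j q x, [/\ j < size s, 0 < q, rot j s = flatten (nseq q x) & lyndon x].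
Proof.
move=> l0; set l := size s.
have Pex : exists c, has (fun j => code (rot j s) == c) (iota 0 l).
  by exists (code (rot 0 s)); apply/hasP; exists 0; rewrite ?mem_iota.
case: (ex_minnP Pex) => c0 /hasP [j0]; rewrite mem_iota add0n => /andP[_ hj0] /eqP ec0 hmin.
set t := rot j0 s.
have st : size t = l by rewrite size_rot.
have tmin : forall i, code t <= code (rot i t).
  move=> i.
  have [J [hJ eJ]] : exists J, J < l /\ rot i t = rot J s.
    case: (leqP l i) => hil.
      by exists j0; rewrite rot_oversize // st.
    rewrite /t rot_add_mod ?(ltnW hil) ?(ltnW hj0) //.
    set K := (if _ then _ else _).
    case: (ltnP K l) => hK; first by exists K.
    by exists 0; rewrite rot0 rot_oversize.
  rewrite eJ ec0; apply: hmin; apply/hasP; exists J; rewrite ?mem_iota //.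
have Pex2 : exists m, (0 < m) && (rot m t == t).
  by exists l; rewrite l0 -{1}st rot_size eqxx.
case: (ex_minnP Pex2) => m /andP[m0 /eqP rm] mmin.
have ml : m <= l by apply: mmin; rewrite l0 -{1}st rot_size eqxx.
have sub : forall i i', i' <= i <= l -> rot i t = t -> rot i' t = t ->
    rot (i - i') t = t.
  move=> i i' /andP[h1 h2] ri ri'.
  by rewrite -{1}ri' -rotD ?subnK // st.
have mult : forall c, c * m <= l -> rot (l - c * m) t = t.
  elim=> [|c IH] h; first by rewrite mul0n subn0 -{1}st rot_size.
  have -> : l - c.+1 * m = (l - c * m) - m by rewrite mulSn; lia.
  apply: sub => //; last by apply: IH; rewrite mulSn in h; lia.
  rewrite mulSn in h; apply/andP; split; lia.
have addm : forall c, c * m <= l -> rot (c * m) t = t.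
  elim=> [|c IH] h; first by rewrite mul0n rot0.
  by rewrite mulSn rotD ?st // IH ?rm //; rewrite mulSn in h; lia.
have dvd : m %| l.
  apply/dvdnP; exists (l %/ m).
  have e := divn_eq l m.
  have hr : rot (l %% m) t = t.
    have -> : l %% m = l - l %/ m * m by lia.
    by apply: mult; lia.
  case: (posnP (l %% m)) => r0; first by lia.
  have := mmin (l %% m); rewrite r0 hr eqxx => /(_ isT).
  by rewrite leqNgt ltn_pmod.
set q := l %/ m; set x := take m t.
have q0 : 0 < q by rewrite divn_gt0.
have sx : size x = m by rewrite size_takel // st.
have tpw : t = flatten (nseq q x).
  have H : forall c, c * m <= l -> take (c * m) t = flatten (nseq c x).
    elim=> [|c IH] h; first by rewrite mul0n take0.
    have hc : c * m + m <= l by rewrite mulSn in h; lia.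
    rewrite mulSn addnC takeD IH; last by lia.
    have e : flatten (nseq c.+1 x) = flatten (nseq c x) ++ x.
      by have := pw_shift x [::] c; rewrite cats0.
    rewrite e; congr (_ ++ _).
    rewrite /x -[in RHS](addm c); last by lia.
    rewrite /rot takel_cat // size_drop st; lia.
  have qm : q * m = l by rewrite /q divnK.
  by rewrite -H qm ?take_oversize ?st.
exists j0, q, x; split => //.
split; first by move=> ex; move: sx; rewrite ex /=; lia.
move=> i /andP[i0 im]; rewrite sx in im.
have ne : rot i x != x.
  apply/negP => /eqP ex.
  have : rot i t = t by rewrite tpw rot_pw ?ex // sx ltnW.
  move=> e; have := mmin i; rewrite i0 e eqxx => /(_ isT); lia.
rewrite lex_code ?size_rot //.
case: (ltngtP (code x) (code (rot i x))) => // hc.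
  have := code_pw_lt _ _ _ q0 (size_rot i x) hc.
  rewrite -rot_pw ?sx ?(ltnW im) // -tpw => h.
  by have := tmin i; lia.
by have := code_inj _ _ (size_rot i x) (esym hc); move/eqP: ne.
Qed.

Section G.
Variables n a b : nat.

Definition letter_of (e : bond) := if is_b_bond n b e then Lb else La.
Definition steps (c : seq bond) := map letter_of c.
Definition vend (w : seq letter) v := foldl (fun u x => (u + step a b x) %% n) v w.
Definition ssum (w : seq letter) := sumn (map (step a b) w).

Lemma path_psi c v : (forall e, e \in c -> is_bond n a b e) -> chained c ->
  (head (v, v) c).1 = v -> c = psi n a b (steps c) v.
Proof.
elim: c v => [//|[e1 e2] c IH] v hb hc /= he.
have [_ h12] := hb (e1, e2) (mem_head _ _).
rewrite /letter_of /is_b_bond /=.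
have E : e2 = (v + step a b (if e2 == (e1 + b) %% n then Lb else La)) %% n.
  rewrite -he; case: eqP => //= /eqP ne; case: h12 => /= h //; by rewrite h eqxx in ne.
rewrite -E -he; congr (_ :: _).
apply: IH.
- by move=> e ec; apply: hb; rewrite in_cons ec orbT.
- by case: c hc {hb} => // e' c [].
- by case: c hc {hb} => //= e' c [].
Qed.

Lemma size_psi w v : size (psi n a b w v) = size w.
Proof. by elim: w v => //= x w IH v; rewrite IH. Qed.

Lemma psi_cat u u' v : psi n a b (u ++ u') v = psi n a b u v ++ psi n a b u' (vend u v).
Proof. by elim: u v => //= x u IH v; rewrite IH. Qed.

Lemma vend_cat u u' v : vend (u ++ u') v = vend u' (vend u v).
Proof. by rewrite /vend foldl_cat. Qed.

Lemma last_psi w v e : e.2 = v -> (last e (psi n a b w v)).2 = vend w v.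
Proof. by elim: w v e => //= x w IH v e _; apply: IH. Qed.

Lemma vend_sum w v : 0 < n -> v < n -> vend w v = (v + ssum w) %% n.
Proof.
move=> n0; elim: w v => [|x w IH] v hv /=; first by rewrite addn0 modn_small.
rewrite /vend /= -/(vend w _) IH ?ltn_pmod //.
by rewrite /ssum /= -/(ssum w) modnDml addnA.
Qed.

Lemma vend_lt w v : 0 < n -> v < n -> vend w v < n.
Proof.
move=> n0; elim: w v => [//|x w IH] v hv /=.
by rewrite /vend /= -/(vend w _); apply: IH; rewrite ltn_pmod.
Qed.

Lemma psi_bonds w v : 0 < n -> v < n -> forall e, e \in psi n a b w v -> is_bond n a b e.
Proof.
move=> n0; elim: w v => [//|x w IH] v hv e /=; rewrite in_cons => /orP[/eqP -> | h].
  by split => //=; case: x; [left|right].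
by apply: (IH _ _ e h); rewrite ltn_pmod.
Qed.

Lemma chained_psi w v : chained (psi n a b w v).
Proof.
elim: w v => [//|x w IH] v /=; case: w IH => //= y w IH; split => //; exact: IH.
Qed.

Lemma circuit_psi w v : 0 < n -> v < n -> w <> [::] -> vend w v = v ->
  is_circuit n a b (psi n a b w v).
Proof.
move=> n0 hv; case: w => [//|x w] _ hw; split => //; split.
  by split; [exact: psi_bonds | exact: chained_psi].
by rewrite /= (last_psi w) //.
Qed.

Lemma psi_pw y v d : vend y v = v ->
  psi n a b (flatten (nseq d y)) v = flatten (nseq d (psi n a b y v)).
Proof. by move=> hy; elim: d => //= d IH; rewrite psi_cat hy IH. Qed.

Lemma ssum_eq w : a <= b -> ssum w = size w * a + countb w * (b - a).
Proof.
move=> ab; elim: w => //= x w IH; rewrite /ssum /= -/(ssum w) IH /countb /=.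
by case: x => /=; rewrite -/(countb w); nia.
Qed.

Lemma steps_count c : countb (steps c) = bcount n b c.
Proof.
rewrite /countb /steps count_map /bcount; apply: eq_count => e.
by rewrite /letter_of /=; case: is_b_bond.
Qed.

Lemma rot_psi j s v0 : j <= size s -> vend s v0 = v0 ->
  rot j (psi n a b s v0) = psi n a b (rot j s) (vend (take j s) v0).
Proof.
move=> hj hs.
rewrite -{1}(cat_take_drop j s) psi_cat.
have sz : size (psi n a b (take j s) v0) = j by rewrite size_psi size_takel.
rewrite -{1}sz rot_size_cat /rot psi_cat -vend_cat cat_take_drop hs.
done.
Qed.

End G.

Lemma rot_class_rot1 (c : seq bond) j i : exists i', rot i (rot j c) = rot i' c.
Proof.
case: (leqP (size c) j) => hj; first by exists i; rewrite (rot_oversize hj).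
case: (leqP (size c) i) => hi.
  by exists j; rewrite rot_oversize // size_rot.
rewrite rot_add_mod ?(ltnW hi) ?(ltnW hj) //; eexists; reflexivity.
Qed.

Lemma rot_class_rot (c : seq bond) j : rot_class (rot j c) = rot_class c.
Proof.
apply: functional_extensionality => c'; apply: propositional_extensionality.
split => [[i ->]|[i ->]]; first exact: rot_class_rot1.
have [i' e] := rot_class_rot1 (rot j c) (size c - j) i.
exists i'; rewrite -e; congr (rot i _).
by rewrite -{1}(rotK j c) /rotr size_rot.
Qed.

Lemma pw_add {T : Type} (x : seq T) i j :
  flatten (nseq (i + j) x) = flatten (nseq i x) ++ flatten (nseq j x).
Proof. by elim: i => //= i IH; rewrite IH catA. Qed.

Lemma pw_mul {T : Type} (x : seq T) i j :
  flatten (nseq (i * j) x) = flatten (nseq i (flatten (nseq j x))).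
Proof. by elim: i => //= i IH; rewrite mulSn pw_add IH. Qed.

Theorem mainTheorem13 (n a b l k omega : nat) :
  2 <= n -> 0 < a -> a < b -> b < n -> gcdn (gcdn n a) b = 1 ->
  1 <= l -> k <= l -> 0 < omega ->
  l * a + k * (b - a) = omega * n ->
  forall p : seq bond -> Prop, in_P n a b l k p ->
  exists q : nat, [/\ 0 < q, q %| gcdn l k & coprime q omega] /\
  exists w : seq letter, inL2q q l k w /\
  exists v : nat, v < n /\ is_circuit n a b (psi n a b w v) /\
    p = rot_class (psi n a b w v).
Proof.
move=> n2 a0 ab bn _ l1 kl om0 E p [[c [[cne [[hb hch] hcl]] [-> [sc bc]]]] prim].
have n0 : 0 < n by lia.
set v0 := (head (0, 0) c).1.
set s := steps n b c.
have cE : c = psi n a b s v0.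
  apply: path_psi => //; rewrite /v0; by case: (c) cne.
have v0n : v0 < n.
  rewrite /v0; move: hb; case: (c) cne => // e c' _ hb; by case: (hb e (mem_head _ _)).
have ss : size s = l by rewrite size_map.
have cs : countb s = k by rewrite steps_count.
have hs : vend n a b s v0 = v0.
  move: hcl; rewrite cE; case: (s) => [|x s'] //=.
  by rewrite (last_psi _ _ _ s') //.
have l0 : 0 < size s by rewrite ss.
have [j [q [x [hj q0 rs lx]]]] := lyndon_decomp s l0.
set v := vend n a b (take j s) v0.
set w := rot j s.
have rc : rot j c = psi n a b w v by rewrite cE rot_psi // ltnW.
have vn : v < n by rewrite /v; apply: vend_lt n0 v0n.
have hw : vend n a b w v = v.
  rewrite /w /rot vend_cat.
  by rewrite /v -(vend_cat _ _ _ (take j s) (drop j s)) cat_take_drop hs.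
have sw : size w = l by rewrite size_rot.
have cw : countb w = k by rewrite /countb count_cat addnC -count_cat cat_take_drop.
have lqx : l = q * size x by rewrite -sw /w rs size_pw.
have kqx : k = q * countb x by rewrite -cw /w rs /countb count_pw.
have wne : w <> [::] by move=> e; move: sw; rewrite e /=; lia.
have pE : rot_class c = rot_class (psi n a b w v) by rewrite -rc rot_class_rot.
exists q; split; first split => //.
- by rewrite dvdn_gcd lqx kqx !dvdn_mulr.
- apply/negPn/negP => ncop.
  set d := gcdn q omega.
  have d0 : 0 < d by rewrite gcdn_gt0 q0.
  have d1 : 1 < d by move: ncop; rewrite /coprime -/d; lia.
  have dq : d %| q := dvdn_gcdl q omega.
  have dom : d %| omega := dvdn_gcdr q omega.
  set y := flatten (nseq (q %/ d) x).
  have qd0 : 0 < q %/ d by rewrite divn_gt0 // dvdn_leq.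
  have wy : w = flatten (nseq d y).
    by rewrite /w rs /y -pw_mul mulnC divnK.
  have sx : ssum a b w = q * ssum a b x.
    by rewrite !ssum_eq ?(ltnW ab) // sw cw lqx kqx; nia.
  have sy : ssum a b y = q %/ d * ssum a b x.
    by rewrite !ssum_eq ?(ltnW ab) // size_pw /countb count_pw -/(countb x); nia.
  have sw2 : ssum a b w = omega * n by rewrite ssum_eq ?(ltnW ab) // sw cw.
  have sy2 : ssum a b y = omega %/ d * n.
    have e1 : d * (q %/ d) = q by rewrite mulnC divnK.
    have e2 : d * (omega %/ d) = omega by rewrite mulnC divnK.
    by apply/eqP; rewrite -(eqn_pmul2l d0) sy !mulnA e1 e2 -sx sw2.
  have hy : vend n a b y v = v by rewrite vend_sum // sy2 addnC modnMDl modn_small.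
  have yne : y <> [::].
    move=> e; have : size y = 0 by rewrite e.
    rewrite size_pw; move: wne; rewrite wy e.
    by move=> H _; apply: H; elim: (d).
  apply: prim; exists (psi n a b y v), d; split; [exact: circuit_psi | split => //].
  by rewrite pE wy psi_pw.
exists w; split.
  exists x; split => //.
  by rewrite lqx kqx !mulKn.
exists v; split => //; split; first exact: circuit_psi.
exact: pE.
Qed.
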